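(* Let $P$ be a finite nonempty poset. Then: (i) there exists a labeling $\epsilon:E(P)\to\{-1,1\}$ (induced by a bijection $\omega:P\to\{1,\dots,p\}$) such that $P$ is $\epsilon$-consistent if and only if $P$ is parity consistent; (ii) there exists a labeling $\epsilon:E(P)\to\{-1,1\}$ (induced by a bijection $\omega:P\to\{1,\dots,p\}$) such that $P$ is $\epsilon$-graded if and only if $P$ is parity graded. Moreover, the labeling $\epsilon$ can be chosen so that the corresponding rank function has values in $\{0,1\}$.
   Context: Let $p=|P|$. Write $x\prec y$ if $y$ covers $x$ and $E(P)=\{(x,y):x\prec y\}$. A bijection $\omega:P\to\{1,\dots,p\}$ induces $\epsilon:E(P)\to\{-1,1\}$ with $\epsilon(x,y)=1$ if $\omega(x)<\omega(y)$ and $-1$ otherwise. $P$ is $\epsilon$-graded if $\sum_{i=1}^n\epsilon(x_{i-1},x_i)$ is the same for every maximal chain $x_0\prec\cdots\prec x_n$ of $P$. $P$ is $\epsilon$-consistent if for every $y\in P$ the principal order ideal $\Lambda_y=\{x\in P:x\le y\}$ is $\epsilon_y$-graded, where $\epsilon_y$ is the restriction of $\epsilon$ to $E(\Lambda_y)$; the rank function is then $\rho(y)=$ the common value of these sums for $\Lambda_y$ (i.e. the $\epsilon$-weight of any saturated chain from a minimal element to $y$). A poset is parity graded if all maximal chains have sizes of the same parity, and parity consistent if every principal order ideal $\Lambda_x$ is parity graded. *)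

(* Defs.v *)
From HB Require Import structures.
From mathcomp Require Import all_boot all_order all_algebra.
Set Implicit Arguments. Unset Strict Implicit. Unset Printing Implicit Defensive.
Import Order.TTheory GRing.Theory Num.Theory.

(* Finite poset P = T : finPOrderType d. A labeling omega : P -> {1..p} is
   modelled as a bijection w : T -> 'I_#|T| (values 0..p-1; only the relative
   order of labels matters for epsilon). *)

Section PosetDefs.
Context {d : Order.disp_t} {T : finPOrderType d}.
Implicit Types (S : {pred T}) (x y z : T).

Definition coversin S x y :=
  [&& x \in S, y \in S, (x < y)%O &
      [forall z, ~~ [&& z \in S, (x < z)%O & (z < y)%O]]].

Definition minimalin S x := (x \in S) && [forall z, (z \in S) ==> ~~ (z < x)%O].
Definition maximalin S x := (x \in S) && [forall z, (z \in S) ==> ~~ (x < z)%O].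

Definition maxchain S (c : seq T) :=
  match c with
  | [::] => false
  | x0 :: s => [&& minimalin S x0, path (coversin S) x0 s & maximalin S (last x0 s)]
  end.

Definition eps (w : T -> 'I_#|T|) x y : int :=
  if (w x < w y)%N then 1%R else (-1)%R.

Fixpoint cweight (w : T -> 'I_#|T|) x (s : seq T) : int :=
  match s with
  | [::] => 0%R
  | y :: s' => (eps w x y + cweight w y s')%R
  end.

Definition chain_weight (w : T -> 'I_#|T|) (c : seq T) : int :=
  match c with [::] => 0%R | x :: s => cweight w x s end.

Definition eps_graded_on (w : T -> 'I_#|T|) S :=
  forall c c', maxchain S c -> maxchain S c' -> chain_weight w c = chain_weight w c'.

Definition ideal y : {pred T} := [pred x | (x <= y)%O].

Definition eps_graded (w : T -> 'I_#|T|) := eps_graded_on w predT.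
Definition eps_consistent (w : T -> 'I_#|T|) := forall y, eps_graded_on w (ideal y).

Definition parity_graded_on S :=
  forall c c', maxchain S c -> maxchain S c' -> odd (size c) = odd (size c').

End PosetDefs.

Definition parity_graded {d : Order.disp_t} (T : finPOrderType d) :=
  parity_graded_on (predT : {pred T}).
Definition parity_consistent {d : Order.disp_t} (T : finPOrderType d) :=
  forall y : T, parity_graded_on (ideal y).

(* Main.v *)
Require Import Defs.
From HB Require Import structures.
From mathcomp Require Import all_boot all_order all_algebra zify.
Set Implicit Arguments. Unset Strict Implicit. Unset Printing Implicit Defensive.
Import Order.Theory.

Section Aux.
Context {d : Order.disp_t} {T : finPOrderType d}.
Implicit Types (x y z a b : T) (s t : seq T).

Local Notation cov := (coversin (predT : {pred T})).

Lemma covP a b : cov a b -> (a < b)%O /\ forall z, (a < z)%O -> (z < b)%O -> False.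
Proof.
case/and4P=> _ _ ab /forallP H; split=> // z az zb.
by move: (H z); rewrite az zb.
Qed.

Lemma L1 y x s : maxchain (ideal y) (x :: s) ->
  [/\ minimalin predT x, path cov x s & last x s = y].
Proof.
case/and3P=> /andP[xy /forallP mx] ps /andP[ly /forallP ml]; split.
- apply/andP; split=> //; apply/forallP=> z; apply/implyP=> _.
  apply/negP=> zx; move: (mx z); rewrite !inE in xy *.
  by rewrite (le_trans (ltW zx) xy) zx.
- apply: sub_path ps => a b /and4P[aS bS ab /forallP H].
  apply/and4P; split=> //; apply/forallP=> z; apply/negP=> /and3P[_ az zb].
  move: (H z); rewrite az zb andbT !inE; rewrite !inE in bS.
  by rewrite (le_trans (ltW zb) bS).
- move: (ml y); rewrite !inE lexx /=; rewrite !inE in ly.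
  move: ly; rewrite le_eqVlt => /orP[/eqP -> //|-> //].
Qed.

Lemma L2aux x s : path cov x s ->
  path (coversin (ideal (last x s))) x s && (x <= last x s)%O.
Proof.
elim: s x => [|a s IH] x /=; first by rewrite lexx.
case/andP=> xa /IH /andP[pa aL]; have [xa' H] := covP xa.
rewrite pa (le_trans (ltW xa') aL) ?andbT.
apply/and4P; split; rewrite ?inE //; first by rewrite (le_trans (ltW xa') aL).
apply/forallP=> z; apply/negP=> /and3P[_ xz za]; exact: H xz za.
Qed.

Lemma L2 x s : minimalin predT x -> path cov x s ->
  maxchain (ideal (last x s)) (x :: s).
Proof.
move=> /andP[_ /forallP mx] ps; have /andP[pi xL] := L2aux ps.
rewrite /= pi /=; apply/andP; split.
- apply/andP; split; first by rewrite inE.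
  apply/forallP=> z; apply/implyP=> _; move: (mx z); by [].
- apply/andP; split; first by rewrite inE.
  apply/forallP=> z; apply/implyP; rewrite inE => zL.
  by apply/negP=> Lz; move: (lt_le_trans Lz zL); rewrite ltxx.
Qed.

Lemma L4 x s t : minimalin predT x -> path cov x s -> path cov (last x s) t ->
  maximalin predT (last (last x s) t) -> maxchain predT (x :: s ++ t).
Proof. by move=> mx ps pt ml; rewrite /= mx cat_path ps pt last_cat. Qed.

Lemma dproper u v : (u < v)%O ->
  [pred z : T | (z < u)%O] \proper [pred z : T | (z < v)%O].
Proof.
move=> uv; apply/properP; split.
  by apply/subsetP=> z; rewrite !inE => zu; exact: lt_trans zu uv.
by exists u; rewrite !inE ?uv ?ltxx.
Qed.

Lemma E1 y : exists x s, [&& minimalin predT x, path cov x s & last x s == y].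
Proof.
suff H : forall n y, #|[pred z : T | (z < y)%O]| <= n ->
  exists x s, [&& minimalin predT x, path cov x s & last x s == y].
  exact: (H _ y (leqnn _)).
elim=> [|n IH] {}y Hn; case: (pickP [pred z : T | (z < y)%O]) => [x0 x0y|none].
- have : 0 < #|[pred z : T | (z < y)%O]| by apply/card_gt0P; exists x0.
  by rewrite leqn0 in Hn; rewrite (eqP Hn).
- exists y, [::]; rewrite /= eqxx andbT; apply/andP; split=> //.
  apply/forallP=> z; apply/implyP=> _; apply/negP=> zy.
  by move: (none z); rewrite inE zy.
- case: (arg_maxnP (fun x => #|[pred z : T | (z < x)%O]|) x0y) => x xA xmax.
  have cxy : cov x y.
    apply/and4P; split=> //; apply/forallP=> z; apply/negP=> /and3P[_ xz zy].
    have := xmax z zy; have := proper_card (dproper xz).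
    by rewrite ltnNge => /negP.
  have /IH [x1 [s /and3P[mx ps /eqP ls]]] : #|[pred z : T | (z < x)%O]| <= n.
    have := proper_card (dproper xA); move=> h; rewrite -ltnS.
    exact: leq_trans h Hn.
  exists x1, (rcons s y); rewrite mx rcons_path ps ls cxy last_rcons eqxx.
  done.
- exists y, [::]; rewrite /= eqxx andbT; apply/andP; split=> //.
  apply/forallP=> z; apply/implyP=> _; apply/negP=> zy.
  by move: (none z); rewrite inE zy.
Qed.

Lemma uproper u v : (u < v)%O ->
  [pred z : T | (v < z)%O] \proper [pred z : T | (u < z)%O].
Proof.
move=> uv; apply/properP; split.
  by apply/subsetP=> z; rewrite !inE => zu; exact: lt_trans uv zu.
by exists v; rewrite !inE ?uv ?ltxx.
Qed.

Lemma E2 y : exists t, path cov y t && maximalin predT (last y t).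
Proof.
suff H : forall n y, #|[pred z : T | (y < z)%O]| <= n ->
  exists t, path cov y t && maximalin predT (last y t).
  exact: (H _ y (leqnn _)).
elim=> [|n IH] {}y Hn; case: (pickP [pred z : T | (y < z)%O]) => [x0 x0y|none].
- have : 0 < #|[pred z : T | (y < z)%O]| by apply/card_gt0P; exists x0.
  by rewrite leqn0 in Hn; rewrite (eqP Hn).
- exists [::]; rewrite /=; apply/andP; split=> //.
  apply/forallP=> z; apply/implyP=> _; apply/negP=> zy.
  by move: (none z); rewrite inE zy.
- case: (arg_maxnP (fun x => #|[pred z : T | (x < z)%O]|) x0y) => x xA xmin.
  have cxy : cov y x.
    apply/and4P; split=> //; apply/forallP=> z; apply/negP=> /and3P[_ xz zy].
    have := xmin z xz; have := proper_card (uproper zy).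
    by rewrite ltnNge => /negP.
  have /IH [t /andP[pt mt]] : #|[pred z : T | (x < z)%O]| <= n.
    have := proper_card (uproper xA); move=> h; rewrite -ltnS.
    exact: leq_trans h Hn.
  by exists (x :: t); rewrite /= cxy pt mt.
- exists [::]; rewrite /=; apply/andP; split=> //.
  apply/forallP=> z; apply/implyP=> _; apply/negP=> zy.
  by move: (none z); rewrite inE zy.
Qed.

Lemma ex_mc y : exists c, maxchain (ideal y) c.
Proof.
have [x [s /and3P[mx ps /eqP ls]]] := E1 y.
by exists (x :: s); rewrite -ls; exact: L2.
Qed.

Lemma cw_par (w : T -> 'I_#|T|) x s : exists k : int, cweight w x s = ((size s)%:Z - 2 * k)%R.
Proof.
elim: s x => [|a s IH] x /=; first by exists 0%R.
have [k ->] := IH a; rewrite /eps; case: ifP => _.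
  by exists k; lia.
by exists (k + 1)%R; lia.
Qed.

Lemma G (w : T -> 'I_#|T|) S : eps_graded_on w S -> parity_graded_on S.
Proof.
move=> H [|x s] [|x' s'] // m m'; have := H _ _ m m'; rewrite /=.
have [k ->] := cw_par w x s; have [k' ->] := cw_par w x' s'.
move=> e; congr negb; lia.
Qed.

Definition ch y := xchoose (ex_mc y).
Definition r y := ~~ odd (size (ch y)).

Section PC.
Hypothesis PC : parity_consistent T.

Lemma r_mc y c : maxchain (ideal y) c -> r y = ~~ odd (size c).
Proof. by move=> m; rewrite /r (PC (xchooseP (ex_mc y)) m). Qed.

Lemma r_cov a b : cov a b -> r b = ~~ r a.
Proof.
move=> ab; have : maxchain (ideal a) (ch a) := xchooseP (ex_mc a).
case E: (ch a) => [|x s] // m.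
have [mx ps ls] := L1 m.
have m2 : maxchain (ideal b) (x :: rcons s b).
  by have := L2 (s := rcons s b) mx; rewrite last_rcons rcons_path ps ls ab; apply.
by rewrite (r_mc m2) /r E /= size_rcons /= negbK.
Qed.

Lemma r_min x : minimalin predT x -> r x = false.
Proof. by move=> mx; rewrite (r_mc (L2 (s := [::]) mx isT)). Qed.

Definition s0 := [seq x <- enum T | ~~ r x] ++ [seq x <- enum T | ~~ ~~ r x].

Lemma s0_perm : perm_eq s0 (enum T).
Proof. by rewrite /s0 (perm_filterC (fun x => ~~ r x)). Qed.

Lemma s0_mem x : x \in s0.
Proof. by rewrite (perm_mem s0_perm) mem_enum. Qed.

Lemma s0_size : size s0 = #|T|.
Proof. by rewrite (perm_size s0_perm) cardE. Qed.

Lemma idx_lt x : index x s0 < #|T|.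
Proof. by rewrite -s0_size index_mem s0_mem. Qed.

Definition w x : 'I_#|T| := Ordinal (idx_lt x).

Lemma w_bij : bijective w.
Proof.
apply: inj_card_bij; last by rewrite card_ord.
move=> x y /(congr1 val) /= e.
by rewrite -(nth_index x (s0_mem x)) e nth_index // s0_mem.
Qed.

Lemma w_lt a b : ~~ r a -> r b -> (w a < w b)%N.
Proof.
move=> ra rb; rewrite /= /s0 !index_cat.
have ain : a \in [seq x <- enum T | ~~ r x] by rewrite mem_filter ra mem_enum.
have bin : b \notin [seq x <- enum T | ~~ r x] by rewrite mem_filter rb.
rewrite ain (negbTE bin); apply: leq_trans (leq_addr _ _).
by rewrite index_mem.
Qed.

Lemma eps_r a b : cov a b -> eps w a b = ((r b)%:Z - (r a)%:Z)%R.
Proof.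
move=> ab; have rb := r_cov ab; rewrite /eps.
case ra: (r a) rb => /= rb.
  have := w_lt (a := b) (b := a); rewrite rb ra => /(_ isT isT).
  by move=> h; rewrite ltnNge (ltnW h).
by rewrite (w_lt (a := a) (b := b)) ?ra ?rb.
Qed.

Lemma cw_tel x s : path cov x s ->
  cweight w x s = ((r (last x s))%:Z - (r x)%:Z)%R.
Proof.
elim: s x => [|a s IH] x /=; first by rewrite GRing.subrr.
case/andP=> xa ps; rewrite (eps_r xa) (IH _ ps).
by rewrite GRing.addrC GRing.addrA GRing.subrK.
Qed.

Lemma cw_min x s : minimalin predT x -> path cov x s ->
  chain_weight w (x :: s) = ((r (last x s))%:Z)%R.
Proof. by move=> mx ps; rewrite /= (cw_tel ps) (r_min mx) GRing.subr0. Qed.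

Lemma cw_ideal y c : maxchain (ideal y) c -> chain_weight w c = ((r y)%:Z)%R.
Proof.
case: c => [|x s] // m; have [mx ps ls] := L1 m.
by rewrite (cw_min mx ps) ls.
Qed.

Lemma w_consistent : eps_consistent w.
Proof. by move=> y c c' m m'; rewrite (cw_ideal m) (cw_ideal m'). Qed.

Lemma w_01 y c : maxchain (ideal y) c -> chain_weight w c \in [:: 0%R; 1%R].
Proof. by move=> m; rewrite (cw_ideal m); case: (r y). Qed.

Lemma cw_top c : maxchain predT c -> exists y, maxchain (ideal y) c.
Proof.
case: c => [|x s] // /and3P[mx ps _].
by exists (last x s); exact: L2.
Qed.

Lemma w_01' c : maxchain predT c -> chain_weight w c \in [:: 0%R; 1%R].
Proof. by move=> /cw_top [y m]; exact: w_01 m. Qed.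

Lemma w_graded : parity_graded T -> eps_graded w.
Proof.
move=> PG c c' m m'.
have [y my] := cw_top m; have [y' my'] := cw_top m'.
rewrite (cw_ideal my) (cw_ideal my') (r_mc my) (r_mc my').
by rewrite (PG _ _ m m').
Qed.
End PC.
End Aux.

Lemma PG_PC {d : Order.disp_t} {T : finPOrderType d} :
  parity_graded T -> parity_consistent T.
Proof.
move=> PG y [|x s] [|x' s'] // m m'.
have [t /andP[pt mt]] := E2 y.
have [mx ps ls] := L1 m; have [mx' ps' ls'] := L1 m'.
have M := L4 mx ps; rewrite ls in M; have {M} M := M _ pt mt.
have M' := L4 mx' ps'; rewrite ls' in M'; have {M'} M' := M' _ pt mt.
have := PG _ _ M M'; rewrite /= !size_cat !oddD.
by case: (odd (size s)); case: (odd (size s')); case: (odd (size t)).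
Qed.

Theorem theorem2p5 (d : Order.disp_t) (T : finPOrderType d) (HT : (0 < #|T|)%N) :
  ((exists w : T -> 'I_#|T|, bijective w /\ eps_consistent w) <-> parity_consistent T)
  /\ ((exists w : T -> 'I_#|T|, bijective w /\ eps_graded w) <-> parity_graded T)
  /\ (parity_consistent T ->
      exists w : T -> 'I_#|T|, [/\ bijective w, eps_consistent w &
        forall (y : T) (c : seq T), maxchain (ideal y) c ->
          chain_weight w c \in [:: 0%R; 1%R]])
  /\ (parity_graded T ->
      exists w : T -> 'I_#|T|, [/\ bijective w, eps_graded w &
        forall c : seq T, maxchain (predT : {pred T}) c ->
          chain_weight w c \in [:: 0%R; 1%R]]).
Proof.
split; [|split; [|split]].
- split; first by case=> w [_ H] y; exact: G (H y).
  by move=> PC; exists w; split; [exact: w_bij | exact: w_consistent].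
- split; first by case=> w [_ H]; exact: G H.
  move=> PG; have PC := PG_PC PG.
  by exists w; split; [exact: w_bij | exact: w_graded].
- move=> PC; exists w; split; [exact: w_bij | exact: w_consistent | ].
  by move=> y c; exact: w_01.
- move=> PG; have PC := PG_PC PG.
  exists w; split; [exact: w_bij | exact: w_graded | ].
  by move=> c; exact: w_01'.
Qed.
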